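(* Let $\mathcal T$ be an $m\times n$ PEPS with contraction $\mathbf T\neq0$ and let $(\Delta,\delta)$ be an $(\epsilon_1,\epsilon_2)$-perturbation of $\mathcal T$. Then, up to $O(\epsilon_1^2+\epsilon_2^2)$, $$\mathscr E_r(\mathcal T,\Delta,\delta)\le\epsilon_1\sum_{i=1}^{n-1}\frac{\|T^{(\cdot,[1,i-1])}_\rightarrow\|_2\,\|\mathbf T^{(\cdot,i)}\|_F\,\|T^{(\cdot,[i+1,n])}_\leftarrow\|_2}{\|\mathbf T\|_F}+\mathscr E_r(\mathcal T^{(\cdot,n)},\delta)\,\frac{\|T^{(\cdot,[1,n-1])}_\rightarrow\|_2\,\|\mathbf T^{(\cdot,n)}\|_F}{\|\mathbf T\|_F}.$$
   Context: PEPS: an $m\times n$ PEPS is a tensor network on the $m\times n$ grid with node tensors $\mathbf T^{(i,j)}$ ($i$ = row, $j$ = column, $(1,1)$ upper left); each node has a physical (uncontracted) leg, horizontal bonds join $(i,j)$ and $(i,j+1)$, vertical bonds join $(i,j)$ and $(i+1,j)$; the contraction $\mathbf T$ sums over all bond indices the product of node entries. The column tensor $\mathbf T^{(\cdot,j)}$ is the contraction of the nodes of column $j$ (open legs: its physical legs and horizontal bonds to columns $j\pm1$); $\mathbf T^{(\cdot,[p,q])}$ is the contraction of columns $p,\dots,q$. $T^{(\cdot,[1,j-1])}_\rightarrow$ is the matricization of $\mathbf T^{(\cdot,[1,j-1])}$ with rows indexed by the physical legs of columns $1,\dots,j-1$ and columns indexed by the horizontal bonds between columns $j-1$ and $j$;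 $T^{(\cdot,[j+1,n])}_\leftarrow$ is the matricization of $\mathbf T^{(\cdot,[j+1,n])}$ with rows indexed by the physical legs of columns $j+1,\dots,n$ and columns indexed by the horizontal bonds between columns $j$ and $j+1$; empty blocks have spectral norm $1$ by convention. Perturbation model: $(\Delta,\delta)$ consists of tensors $\Delta^{(j)}$ ($1\le j\le n-1$) of the shape of $\mathbf T^{(\cdot,j)}$ and $\delta^{(i)}$ ($1\le i\le m$) of the shape of $\mathbf T^{(i,n)}$; the perturbed PEPS has column tensors $\mathbf T^{(\cdot,j)}+\Delta^{(j)}$ for $j\le n-1$ and nodes $\mathbf T^{(i,n)}+\delta^{(i)}$ in column $n$; $\hat{\mathbf T}$ is its contraction and $\mathscr E_r(\mathcal T,\Delta,\delta)=\|\hat{\mathbf T}-\mathbf T\|_F/\|\mathbf T\|_F$. It is an $(\epsilon_1,\epsilon_2)$-perturbation if $\|\Delta^{(j)}\|_F\le\epsilon_1\|\mathbf T^{(\cdot,j)}\|_F$ and $\|\delta^{(i)}\|_F\le\epsilon_2\|\mathbf T^{(i,n)}\|_F$ for all $j\le n-1$, $i\le m$. $\mathscr E_r(\mathcal T^{(\cdot,n)},\delta)=\|\hat{\mathbf T}^{(\cdot,n)}-\mathbf T^{(\cdot,n)}\|_F/\|\mathbf T^{(\cdot,n)}\|_F$, where $\hat{\mathbf T}^{(\cdot,n)}$ is the contraction of the perturbed nodes of column $n$. $\|\cdot\|_F$ Frobenius, $\|\cdot\|_2$ spectral norm. *)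

(* Defs.v *)
From Stdlib Require Import Reals ClassicalEpsilon.
From HB Require Import structures.
From mathcomp Require Import all_boot.
Set Implicit Arguments. Unset Strict Implicit. Unset Printing Implicit Defensive.

Open Scope R_scope.

Lemma Rplus_assoc' : associative Rplus.
Proof. by move=> x y z; rewrite Rplus_assoc. Qed.
Lemma Rmult_assoc' : associative Rmult.
Proof. by move=> x y z; rewrite Rmult_assoc. Qed.
HB.instance Definition _ := Monoid.isComLaw.Build R 0 Rplus Rplus_assoc' Rplus_comm Rplus_0_l.
HB.instance Definition _ := Monoid.isComLaw.Build R 1 Rmult Rmult_assoc' Rmult_comm Rmult_1_l.

Notation "\rsum_ ( x : X ) F" := (\big[Rplus/0]_(x : X) F)
  (at level 41, F at level 41, x, X at level 50).
Notation "\rprod_ ( x : X ) F" := (\big[Rmult/1]_(x : X) F)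
  (at level 36, F at level 36, x, X at level 50).

Definition fnorm1 (X : finType) (f : X -> R) : R :=
  sqrt (\rsum_(x : X) (f x)^2).
Definition fnorm3 (X Y Z : finType) (f : X -> Y -> Z -> R) : R :=
  sqrt (\rsum_(x : X) \rsum_(y : Y) \rsum_(z : Z) (f x y z)^2).
Definition fnorm5 (X1 X2 X3 X4 X5 : finType) (f : X1 -> X2 -> X3 -> X4 -> X5 -> R) : R :=
  sqrt (\rsum_(x1 : X1) \rsum_(x2 : X2) \rsum_(x3 : X3) \rsum_(x4 : X4) \rsum_(x5 : X5)
        (f x1 x2 x3 x4 x5)^2).

Definition specnorm (X Y : finType) (M : X -> Y -> R) : R :=
  epsilon (inhabits 0)
    (is_lub (fun r => exists v : Y -> R,
                \rsum_(y : Y) (v y)^2 <= 1 /\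
                r = sqrt (\rsum_(x : X) (\rsum_(y : Y) M x y * v y)^2))).

(* Rows and columns are 0-indexed: row i (0 <= i < m) and column j (0 <= j < n)
   of the paper's node (i+1, j+1).  Horizontal bond k of row i sits between
   columns k-1 and k; bonds 0 and >= n are the (trivial, dimension-1) open
   boundary.  Vertical bond l of column j sits between rows l-1 and l; bonds 0
   and >= m are trivial. *)

Definition bdim (N : nat) (d : nat -> nat -> nat) (a k : nat) : nat :=
  if (k == 0)%N || (N <= k)%N then 1%N else d a k.

Record peps (m n : nat) := PEPS {
  pdim : nat -> nat -> nat;
  hdim : nat -> nat -> nat;          (* hdim i k : horizontal bond k of row i *)
  vdim : nat -> nat -> nat;          (* vdim j l : vertical bond l of column j *)
  node : forall i j : nat,
      'I_(pdim i j) ->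
      'I_(bdim n hdim i j) -> 'I_(bdim n hdim i j.+1) ->   (* left, right bonds *)
      'I_(bdim m vdim j i) -> 'I_(bdim m vdim j i.+1) ->   (* up, down bonds *)
      R
}.
Arguments node {m n} p i j.

Unset Implicit Arguments.
Section PEPSdefs.
Variables (m n : nat) (T : peps m n).

Definition nodeT (i j : nat) : Type :=
  'I_(pdim T i j) -> 'I_(bdim n (hdim T) i j) -> 'I_(bdim n (hdim T) i j.+1) ->
  'I_(bdim m (vdim T) j i) -> 'I_(bdim m (vdim T) j i.+1) -> R.

Definition addNode (i j : nat) (A B : nodeT i j) : nodeT i j :=
  fun a b c d e => A a b c d e + B a b c d e.

(* physical legs of column j, horizontal bonds k (one per row), vertical
   bonds of column j *)
Definition CP (j : nat) : finType := {dffun forall i : 'I_m, 'I_(pdim T i j)}.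
Definition CB (k : nat) : finType := {dffun forall i : 'I_m, 'I_(bdim n (hdim T) i k)}.
Definition VB (j : nat) : finType := {dffun forall l : 'I_m.+1, 'I_(bdim m (vdim T) j l)}.

Definition colT (j : nat) : Type := CP j -> CB j -> CB j.+1 -> R.

Definition addCol (j : nat) (A B : colT j) : colT j := fun s a b => A s a b + B s a b.

Definition colOf (j : nat) (N : forall i : nat, nodeT i j) : colT j :=
  fun s a b => \rsum_(c : VB j) \rprod_(i : 'I_m)
     N i (s i) (a i) (b i) (c (widen_ord (leqnSn m) i)) (c (lift ord0 i)).

Definition column (j : nat) : colT j := colOf j (fun i => node T i j).

(* physical index type of columns k, ..., k+d-1 *)
Fixpoint rowRng (k d : nat) : finType :=
  match d with
  | 0 => unit
  | d'.+1 => (rowRng k d' * CP (d' + k))%type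
  end.

Fixpoint rng (C : forall j, colT j) (k d : nat) : rowRng k d -> CB k -> CB (d + k) -> R :=
  match d return rowRng k d -> CB k -> CB (d + k) -> R with
  | 0 => fun _ a b => if a == b then 1 else 0
  | d'.+1 => fun r a b =>
      \rsum_(c : CB (d' + k)) rng C k d' r.1 a c * C (d' + k)%N r.2 c b
  end.

Definition contract (C : forall j, colT j) : rowRng 0 n -> R :=
  fun S => \rsum_(a : CB 0) \rsum_(b : CB (n + 0)) rng C 0 n S a b.

(* matricization T^(.,[1,j])_-> : the block of columns 0..j-1, rows = their
   physical legs, columns = horizontal bonds j (between columns j-1 and j) *)
Definition leftMat (C : forall j, colT j) (j : nat) : rowRng 0 j -> CB (j + 0) -> R :=
  fun r b => \rsum_(a : CB 0) rng C 0 j r a b.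

(* matricization T^(.,[j+1,n])_<- : block of columns j+1..n-1, rows = their
   physical legs, columns = horizontal bonds j+1 (between columns j and j+1) *)
Definition rightMat (C : forall j, colT j) (j : nat) :
    rowRng j.+1 (n - j.+1) -> CB j.+1 -> R :=
  fun r a => \rsum_(b : CB (n - j.+1 + j.+1)) rng C j.+1 (n - j.+1) r a b.

(* Delta j : perturbation of column tensor j (used for j < n-1, i.e. the
   paper's columns 1..n-1); delta i : perturbation of node (i, n-1), i.e. the
   paper's node (i+1, n) in the last column. *)

Definition pertNode (delta : forall i, nodeT i n.-1) (i j : nat) : nodeT i j :=
  match Nat.eq_dec n.-1 j with
  | left e => addNode i j (node T i j) (eq_rect _ (fun k => nodeT i k) (delta i) j e)
  | right _ => node T i j
  end.

Definition pertChain (Delta : forall j, colT j) (delta : forall i, nodeT i n.-1) :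
    forall j, colT j :=
  fun j => if (j < n.-1)%N then addCol j (column j) (Delta j)
           else colOf j (fun i => pertNode delta i j).

Definition isPert (eps1 eps2 : R) (Delta : forall j, colT j)
    (delta : forall i, nodeT i n.-1) : Prop :=
  (forall j : nat, (j < n.-1)%N -> fnorm3 (Delta j) <= eps1 * fnorm3 (column j)) /\
  (forall i : nat, (i < m)%N -> fnorm5 (delta i) <= eps2 * fnorm5 (node T i n.-1)).

Definition normT : R := fnorm1 (contract column).

Definition relErr (Delta : forall j, colT j) (delta : forall i, nodeT i n.-1) : R :=
  fnorm1 (fun S => contract (pertChain Delta delta) S - contract column S) / normT.

Definition relErrCol (delta : forall i, nodeT i n.-1) : R :=
  fnorm3 (fun s a b => colOf n.-1 (fun i => addNode i n.-1 (node T i n.-1) (delta i)) s a b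
                       - column n.-1 s a b)
  / fnorm3 (column n.-1).

End PEPSdefs.

(* Main.v *)
Require Import Defs.
From Stdlib Require Import Reals ClassicalEpsilon Lra Lia.
From HB Require Import structures.
From mathcomp Require Import all_boot zify.
Open Scope R_scope.

Unset Implicit Arguments. Set Strict Implicit.

Section SumLemmas.
Variable (I : Type) (r : seq I) (P : pred I).

Lemma sumRD (F G : I -> R) :
  \big[Rplus/0]_(i <- r | P i) (F i + G i) =
  \big[Rplus/0]_(i <- r | P i) F i + \big[Rplus/0]_(i <- r | P i) G i.
Proof. exact: big_split. Qed.

Lemma sumRMl (c : R) (F : I -> R) :
  c * \big[Rplus/0]_(i <- r | P i) F i = \big[Rplus/0]_(i <- r | P i) (c * F i).
Proof.
elim/big_rec2: _ => [|i y1 y2 _ <-]; first by rewrite Rmult_0_r.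
by rewrite Rmult_plus_distr_l.
Qed.

Lemma sumRMr (c : R) (F : I -> R) :
  \big[Rplus/0]_(i <- r | P i) F i * c = \big[Rplus/0]_(i <- r | P i) (F i * c).
Proof. rewrite Rmult_comm sumRMl; apply: eq_bigr => i _; exact: Rmult_comm. Qed.

Lemma sumRN (F : I -> R) :
  - (\big[Rplus/0]_(i <- r | P i) F i) = \big[Rplus/0]_(i <- r | P i) (- F i).
Proof.
elim/big_rec2: _ => [|i y1 y2 _ <-]; first by rewrite Ropp_0.
by rewrite Ropp_plus_distr.
Qed.

Lemma sumRB (F G : I -> R) :
  \big[Rplus/0]_(i <- r | P i) F i - \big[Rplus/0]_(i <- r | P i) G i =
  \big[Rplus/0]_(i <- r | P i) (F i - G i).
Proof. by rewrite /Rminus sumRN -sumRD. Qed.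

Lemma sumR_le (F G : I -> R) : (forall i, P i -> F i <= G i) ->
  \big[Rplus/0]_(i <- r | P i) F i <= \big[Rplus/0]_(i <- r | P i) G i.
Proof. move=> h; elim/big_ind2: _ => //; [lra | move=> *; lra]. Qed.

Lemma sumR_ge0 (F : I -> R) : (forall i, P i -> 0 <= F i) ->
  0 <= \big[Rplus/0]_(i <- r | P i) F i.
Proof. move=> h; elim/big_ind: _ => //; [lra | move=> *; lra]. Qed.

Lemma sumR_abs (F : I -> R) :
  Rabs (\big[Rplus/0]_(i <- r | P i) F i) <= \big[Rplus/0]_(i <- r | P i) Rabs (F i).
Proof.
elim/big_ind2: _ => [|x1 x2 y1 y2 h1 h2|i _]; last by lra.
  by rewrite Rabs_R0; lra.
by apply: Rle_trans (Rabs_triang _ _) _; lra.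
Qed.
End SumLemmas.

Lemma sumR_const (X : finType) (c : R) : \rsum_(x : X) c = INR #|X| * c.
Proof.
rewrite big_const; elim: #|X| => [|k IH]; first by rewrite /=; lra.
rewrite iterS IH S_INR; lra.
Qed.

Lemma sumR_term (X : finType) (F : X -> R) (x0 : X) :
  (forall x, 0 <= F x) -> F x0 <= \rsum_(x : X) F x.
Proof.
move=> h; rewrite (bigD1 x0) //=.
have : 0 <= \big[Rplus/0]_(x | x != x0) F x by apply: sumR_ge0 => x _.
lra.
Qed.

Lemma sumR_abs_le (X : finType) (F : X -> R) (c : R) :
  (forall x, Rabs (F x) <= c) -> Rabs (\rsum_(x : X) F x) <= INR #|X| * c.
Proof.
move=> h; apply: Rle_trans (sumR_abs _ _ _ _) _; rewrite -sumR_const.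
by apply: sumR_le => x _.
Qed.

Set Implicit Arguments. Unset Strict Implicit.

Lemma abs_le_sqrt (a S : R) : a ^ 2 <= S -> Rabs a <= sqrt S.
Proof.
move=> h; rewrite -sqrt_Rsqr_abs; apply: sqrt_le_1_alt.
by rewrite Rsqr_pow2.
Qed.

Lemma sqr_ge0 (x : R) : 0 <= x ^ 2.
Proof. exact: pow2_ge_0. Qed.

Lemma sumsq_ge0 (X : finType) (f : X -> R) : 0 <= \rsum_(x : X) f x ^ 2.
Proof. by apply: sumR_ge0 => x _; apply: sqr_ge0. Qed.

Lemma sumsq_term (X : finType) (f : X -> R) x0 : f x0 ^ 2 <= (\rsum_(x : X) f x ^ 2).
Proof. by apply: (@sumR_term _ (fun x => f x ^ 2)) => x; apply: sqr_ge0. Qed.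

Lemma sumsq0 (X : finType) (f : X -> R) : (\rsum_(x : X) f x ^ 2) = 0 -> forall x, f x = 0.
Proof.
move=> h x; have := sumsq_term f x; rewrite h => hx.
have := sqr_ge0 (f x); move=> hx'.
have : f x ^ 2 = 0 by lra.
by move=> h0; case: (Req_dec (f x) 0) => // hne; by case: (pow_nonzero _ 2 hne).
Qed.

Lemma entry_fnorm3 (X Y Z : finType) (f : X -> Y -> Z -> R) x y z :
  Rabs (f x y z) <= fnorm3 f.
Proof.
apply: abs_le_sqrt.
apply: Rle_trans (@sumR_term _ (fun x => \rsum_(y : Y) \rsum_(z : Z) f x y z ^ 2) x _); last first.
  by move=> x'; apply: sumR_ge0 => y' _; apply: sumsq_ge0.
apply: Rle_trans (@sumR_term _ (fun y => \rsum_(z : Z) f x y z ^ 2) y _); last first.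
  by move=> y'; apply: sumsq_ge0.
exact: sumsq_term.
Qed.

Lemma entry_fnorm5 (X1 X2 X3 X4 X5 : finType) (f : X1 -> X2 -> X3 -> X4 -> X5 -> R) x1 x2 x3 x4 x5 :
  Rabs (f x1 x2 x3 x4 x5) <= fnorm5 f.
Proof.
apply: abs_le_sqrt.
apply: Rle_trans (@sumR_term _ (fun x1 => \rsum_(x2 : X2) \rsum_(x3 : X3) \rsum_(x4 : X4) \rsum_(x5 : X5) f x1 x2 x3 x4 x5 ^ 2) x1 _); last first.
  by move=> ?; do 3 (apply: sumR_ge0 => ? _); apply: sumsq_ge0.
apply: Rle_trans (@sumR_term _ (fun x2 => \rsum_(x3 : X3) \rsum_(x4 : X4) \rsum_(x5 : X5) f x1 x2 x3 x4 x5 ^ 2) x2 _); last first.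
  by move=> ?; do 2 (apply: sumR_ge0 => ? _); apply: sumsq_ge0.
apply: Rle_trans (@sumR_term _ (fun x3 => \rsum_(x4 : X4) \rsum_(x5 : X5) f x1 x2 x3 x4 x5 ^ 2) x3 _); last first.
  by move=> ?; do 1 (apply: sumR_ge0 => ? _); apply: sumsq_ge0.
apply: Rle_trans (@sumR_term _ (fun x4 => \rsum_(x5 : X5) f x1 x2 x3 x4 x5 ^ 2) x4 _); last first.
  by move=> ?; apply: sumsq_ge0.
exact: sumsq_term.
Qed.

Lemma quad_expand (X : finType) (f g : X -> R) (t : R) :
  (\rsum_(x : X) (t * f x + g x) ^ 2) =
  t ^ 2 * (\rsum_(x : X) f x ^ 2) + 2 * t * (\rsum_(x : X) (f x * g x)) + (\rsum_(x : X) g x ^ 2).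
Proof.
rewrite !sumRMl -!sumRD; apply: eq_bigr => x _; ring.
Qed.

Lemma CS (X : finType) (f g : X -> R) :
  (\rsum_(x : X) (f x * g x)) ^ 2 <= (\rsum_(x : X) f x ^ 2) * (\rsum_(x : X) g x ^ 2).
Proof.
set a := \rsum_(x : X) f x ^ 2; set b := \rsum_(x : X) (f x * g x);
set c := \rsum_(x : X) g x ^ 2.
have ha : 0 <= a by apply: sumsq_ge0.
have hc : 0 <= c by apply: sumsq_ge0.
have [a0|apos] : a = 0 \/ 0 < a by lra.
  have fz := sumsq0 a0.
  have -> : b = 0 by rewrite /b big1 // => x _; rewrite fz; ring.
  rewrite a0; lra.
have := sumsq_ge0 (fun x => (- b / a) * f x + g x).
rewrite quad_expand -/a -/b -/c => h.
have e : (- b / a) ^ 2 * a + 2 * (- b / a) * b + c = c - b ^ 2 / a by field; lra.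
rewrite e in h.
have : b ^ 2 / a <= c by lra.
move=> h2; have := Rmult_le_compat_r a _ _ (Rlt_le _ _ apos) h2.
have -> : b ^ 2 / a * a = b ^ 2 by field; lra.
lra.
Qed.

Lemma mink (X : finType) (f g : X -> R) :
  sqrt (\rsum_(x : X) (f x + g x) ^ 2) <=
  sqrt (\rsum_(x : X) f x ^ 2) + sqrt (\rsum_(x : X) g x ^ 2).
Proof.
have := CS f g.
have := quad_expand f g 1.
have -> : (\rsum_(x : X) (1 * f x + g x) ^ 2) = (\rsum_(x : X) (f x + g x) ^ 2).
  by apply: eq_bigr => x _; ring.
set a := \rsum_(x : X) f x ^ 2; set b := \rsum_(x : X) (f x * g x);
set c := \rsum_(x : X) g x ^ 2; set s := \rsum_(x : X) (f x + g x) ^ 2 => hs hcs.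
have ha : 0 <= a by apply: sumsq_ge0.
have hc : 0 <= c by apply: sumsq_ge0.
have hb : b <= sqrt a * sqrt c.
  rewrite -sqrt_mult //; apply: Rle_trans (Rle_abs b) _; exact: abs_le_sqrt.
have sa := sqrt_sqrt a ha; have sc := sqrt_sqrt c hc.
have := sqrt_pos a; have := sqrt_pos c => h1 h2.
rewrite -(sqrt_pow2 (sqrt a + sqrt c)); last lra.
apply: sqrt_le_1_alt; rewrite hs; nra.
Qed.

Set Implicit Arguments. Unset Strict Implicit.

Section Spec.
Variables (X Y : finType) (M : X -> Y -> R).

Definition specset := (fun r => exists v : Y -> R,
                (\rsum_(y : Y) (v y)^2) <= 1 /\
                r = sqrt (\rsum_(x : X) (\rsum_(y : Y) M x y * v y)^2)).

Lemma spec_lub : is_lub specset (specnorm M).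
Proof.
rewrite /specnorm; apply: epsilon_spec.
have hb : bound specset.
  exists (sqrt (\rsum_(x : X) \rsum_(y : Y) M x y ^ 2)) => r [v [hv ->]].
  apply: sqrt_le_1_alt; apply: sumR_le => x _.
  apply: Rle_trans (CS (M x) v) _.
  have := sumsq_ge0 (M x); nra.
have hne : exists r, specset r.
  exists (sqrt (\rsum_(x : X) (\rsum_(y : Y) M x y * 0)^2)); exists (fun _ => 0); split; last by [].
  rewrite big1 => [|y _]; [lra | simpl; lra].
have [m hm] := completeness _ hb hne.
by exists m.
Qed.

Lemma spec_ge0 : 0 <= specnorm M.
Proof.
have [h _] := spec_lub; apply: h; exists (fun _ => 0); split.
  rewrite big1 => [|y _]; [lra | simpl; lra].
rewrite big1 ?sqrt_0 // => x _.
rewrite big1 => [|y _]; [simpl; lra | simpl; lra].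
Qed.

Lemma spec_bound (v : Y -> R) :
  (\rsum_(x : X) (\rsum_(y : Y) M x y * v y)^2) <= specnorm M ^ 2 * (\rsum_(y : Y) (v y)^2).
Proof.
have hs := spec_ge0.
set nv := \rsum_(y : Y) (v y)^2.
have hnv : 0 <= nv by apply: sumsq_ge0.
have [n0|npos] : nv = 0 \/ 0 < nv by lra.
  have vz := sumsq0 n0.
  rewrite n0 Rmult_0_r big1 => [|x _]; first lra.
  rewrite big1 /= => [|y _]; [lra | rewrite vz; lra].
have sn := sqrt_lt_R0 _ npos.
have ssn := sqrt_sqrt _ hnv.
move: (sqrt nv) sn ssn => s sn ssn.
pose w y := v y / s.
have hw : (\rsum_(y : Y) (w y)^2) <= 1.
  have -> : (\rsum_(y : Y) (w y)^2) = (\rsum_(y : Y) (v y)^2) / nv.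
    rewrite /Rdiv sumRMr; apply: eq_bigr => y _; rewrite /w.
    rewrite -ssn; field; lra.
  rewrite -/nv; have -> : nv / nv = 1 by field; lra.
  lra.
have [hub _] := spec_lub.
have := hub _ (ex_intro _ w (conj hw erefl)).
have -> : (\rsum_(x : X) (\rsum_(y : Y) M x y * w y)^2) =
          (\rsum_(x : X) (\rsum_(y : Y) M x y * v y)^2) / nv.
  rewrite /Rdiv sumRMr; apply: eq_bigr => x _.
  have -> : (\rsum_(y : Y) M x y * w y) = (\rsum_(y : Y) M x y * v y) / s.
    rewrite /Rdiv sumRMr; apply: eq_bigr => y _; rewrite /w; field; lra.
  rewrite -ssn; field; lra.
set L := \rsum_(x : X) _.
have hL : 0 <= L by apply: sumsq_ge0.
move=> h.
have h2 : L / nv <= specnorm M ^ 2.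
  have hq : 0 <= L / nv by apply: Rmult_le_pos; [lra | apply: Rlt_le; apply: Rinv_0_lt_compat].
  rewrite -(sqrt_sqrt (L / nv)) //.
  have := sqrt_pos (L / nv); nra.
have := Rmult_le_compat_r nv _ _ hnv h2.
have -> : L / nv * nv = L by field; lra.
lra.
Qed.

Lemma spec_le (b : R) : (forall r, specset r -> r <= b) -> specnorm M <= b.
Proof. by move=> h; have [_ h2] := spec_lub; apply: h2. Qed.

End Spec.

Unset Implicit Arguments. Set Strict Implicit.

Lemma sum_unit (F : unit -> R) : (\rsum_(u : unit) F u) = F tt.
Proof.
rewrite (bigD1 tt) //= big_pred0 ?Rplus_0_r // => [[]].
Qed.

Lemma sum_pair (I J : finType) (F : I -> J -> R) :
  (\rsum_(i : I) \rsum_(j : J) F i j) = \rsum_(p : (I * J)%type) F p.1 p.2.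
Proof. by rewrite pair_big. Qed.

Lemma sum_delta (I : finType) (F : I -> R) (b : I) :
  (\rsum_(c : I) F c * (if c == b then 1 else 0)) = F b.
Proof.
rewrite (bigD1 b) //= eqxx big1 => [|c /negbTE ->]; lra.
Qed.

Section PEPS.
Variables (m n : nat) (T : peps m n).
Local Notation CBt := (CB m n T).
Local Notation CPt := (CP m n T).
Local Notation colTt := (colT m n T).
Local Notation rowRngt := (rowRng m n T).
Local Notation rngt := (rng m n T).

Definition castB (p q : nat) (e : p = q) (c : CBt p) : CBt q :=
  eq_rect p (fun k => CBt k) c q e.
Definition castP (p q : nat) (e : p = q) (c : CPt p) : CPt q :=
  eq_rect p (fun k => CPt k) c q e.
Arguments castB {p q} e c.
Arguments castP {p q} e c.

Lemma castB_sum (p q : nat) (e : p = q) (F : CBt q -> R) :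
  (\rsum_(c : CBt p) F (castB e c)) = \rsum_(c : CBt q) F c.
Proof. by case: q / e F. Qed.

Lemma castP_sum (p q : nat) (e : p = q) (F : CPt q -> R) :
  (\rsum_(c : CPt p) F (castP e c)) = \rsum_(c : CPt q) F c.
Proof. by case: q / e F. Qed.

Lemma castB_eq (p q : nat) (e : p = q) (c c' : CBt p) :
  (castB e c == castB e c') = (c == c').
Proof. by case: q / e. Qed.

Lemma castB_K (p q : nat) (e1 : p = q) (e2 : q = p) (c : CBt q) :
  castB e1 (castB e2 c) = c.
Proof. case: p / e2 e1 => e1; by rewrite (eq_irrelevance e1 erefl). Qed.

Lemma col_transport (C : forall j, colTt j) (p q : nat) (e : p = q) s c b :
  C q (castP e s) (castB e c) (castB (congr1 S e) b) = C p s c b.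
Proof. by case: q / e. Qed.

Lemma rng_ext (C1 C2 : forall j, colTt j) k d :
  (forall j s a b, (k <= j)%N -> (j < d + k)%N -> C1 j s a b = C2 j s a b) ->
  forall r a b, rngt C1 k d r a b = rngt C2 k d r a b.
Proof.
elim: d => [|d IH] h r a b //=.
apply: eq_bigr => c _; rewrite IH; last first.
  move=> j s a' b' h1 h2; apply: h => //; rewrite addSn; lia.
by rewrite h //; rewrite ?addSn; lia.
Qed.

Fixpoint phi (k e : nat) : rowRngt 0 k -> rowRngt k e -> rowRngt 0 (e + k) :=
  match e return rowRngt 0 k -> rowRngt k e -> rowRngt 0 (e + k) with
  | 0 => fun x _ => x
  | e'.+1 => fun x y => (phi k e' x y.1, castP (esym (addn0 (e' + k)%N)) y.2)
  end.

Lemma sum_split (k e : nat) (F : rowRngt 0 (e + k) -> R) :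
  (\rsum_(S : rowRngt 0 (e + k)) F S) =
  \rsum_(x : rowRngt 0 k) \rsum_(y : rowRngt k e) F (phi k e x y).
Proof.
elim: e F => [|e IH] F.
  by apply: eq_bigr => x _; rewrite sum_unit.
have -> : (\rsum_(S : rowRngt 0 (e.+1 + k)) F S) =
          \rsum_(S : (rowRngt 0 (e + k) * CPt (e + k + 0))%type) F S by [].
have -> : (\rsum_(S : (rowRngt 0 (e + k) * CPt (e + k + 0))%type) F S) =
          \rsum_(S : (rowRngt 0 (e + k) * CPt (e + k + 0))%type) F (S.1, S.2).
  by apply: eq_bigr => -[].
rewrite -(@sum_pair _ _ (fun a b => F (a, b))) IH; apply: eq_bigr => x _.
have -> : (\rsum_(y : rowRngt k e.+1) F (phi k e.+1 x y)) =
          \rsum_(y : (rowRngt k e * CPt (e + k))%type) F (phi k e x y.1, castP (esym (addn0 (e + k)%N)) y.2) by [].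
rewrite -(@sum_pair _ _ (fun a b => F (phi k e x a, castP (esym (addn0 (e + k)%N)) b))); apply: eq_bigr => y _.
by rewrite -(castP_sum _ _ (esym (addn0 (e + k)%N))).
Qed.


Lemma rng_split (C : forall j, colTt j) k e x y a b :
  rngt C 0 (e + k) (phi k e x y) a b =
  \rsum_(c : CBt (k + 0)) rngt C 0 k x a c *
      rngt C k e y (castB (addn0 k) c) (castB (addn0 (e + k)%N) b).
Proof.
elim: e y b => [|e IH] y b.
  rewrite /=.
  under eq_bigr => c _ do rewrite castB_eq.
  by rewrite sum_delta.
have -> : rngt C 0 (e.+1 + k) (phi k e.+1 x y) a b =
  \rsum_(c' : CBt (e + k + 0)) rngt C 0 (e + k) (phi k e x y.1) a c' *
     C (e + k + 0)%N (castP (esym (addn0 (e + k)%N)) y.2) c' b by [].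
under eq_bigr => c' _ do rewrite IH sumRMr.
rewrite exchange_big /=; apply: eq_bigr => c _.
rewrite sumRMl -(castB_sum _ _ (addn0 (e + k)%N)); apply: eq_bigr => c' _.
have t := col_transport C _ _ (esym (addn0 (e + k)%N)) y.2 (castB (addn0 (e + k)%N) c')
   (castB (addn0 (e.+1 + k)%N) b).
rewrite !castB_K in t.
by rewrite t Rmult_assoc.
Qed.

End PEPS.
Arguments castB {m n T p q} e c.
Arguments castP {m n T p q} e c.
Arguments phi {m n T} k e x y.
Arguments castB_sum {m n T p q} e F.
Arguments castP_sum {m n T p q} e F.
Arguments castB_eq {m n T p q} e c c'.
Arguments castB_K {m n T p q} e1 e2 c.
Arguments col_transport {m n T} C {p q} e s c b.
Arguments rng_split {m n T} C k e x y a b.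
Arguments sum_split {m n T} k e F.
Arguments rng_ext {m n T} C1 C2 k d.


Unset Implicit Arguments. Set Strict Implicit.

Section Lin.
Variables (m n : nat) (T : peps m n).
Local Notation CBt := (CB m n T).
Local Notation CPt := (CP m n T).
Local Notation colTt := (colT m n T).
Local Notation rowRngt := (rowRng m n T).
Local Notation rngt := (rng m n T).

Variables (A D : forall j, colTt j) (p : nat).
Definition Fp : forall j, colTt j := fun j => if j == p then D j else A j.

Lemma len_transport (N N' : nat) (h : N = N') (G : forall N, rowRngt 0 N -> R) :
  (\rsum_(S : rowRngt 0 N) G N S) = \rsum_(S : rowRngt 0 N') G N' S.
Proof. by case: N' / h. Qed.

Lemma lin_bound : (p < n)%N ->
  fnorm1 (contract m n T Fp) <=
  specnorm (leftMat m n T A p) * fnorm3 (D p) * specnorm (rightMat m n T A p).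
Proof.
move=> hp.
set k := p.+1; set e := (n - p.+1)%N.
have hn : n = (e + k)%N by rewrite /e /k; lia.
set L := leftMat m n T A p; set Rm := rightMat m n T A p.
have hL := spec_ge0 L; have hR := spec_ge0 Rm.
have hD : 0 <= fnorm3 (D p) by apply: sqrt_pos.
rewrite /fnorm1 /contract.
rewrite -(sqrt_pow2 (specnorm L * fnorm3 (D p) * specnorm Rm)); last first.
  by apply: Rmult_le_pos => //; apply: Rmult_le_pos.
apply: sqrt_le_1_alt.
rewrite (len_transport _ _ hn (fun N S => (\rsum_(a : CBt 0) \rsum_(b : CBt (N + 0)) rngt Fp 0 N S a b) ^ 2)).
rewrite sum_split.
pose K (x : rowRngt 0 k) (c : CBt (k + 0)) := \rsum_(a : CBt 0) rngt Fp 0 k x a c.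
have step1 : forall x y,
   (\rsum_(a : CBt 0) \rsum_(b : CBt (e + k + 0)) rngt Fp 0 (e + k) (phi k e x y) a b) =
   \rsum_(c0 : CBt k) Rm y c0 * K x (castB (esym (addn0 k)) c0).
  move=> x y.
  under eq_bigr => a _ do under eq_bigr => b _ do rewrite rng_split.
  rewrite -(castB_sum (addn0 k)).
  under [RHS]eq_bigr => c _ do rewrite castB_K.
  under eq_bigr => a _ do rewrite exchange_big.
  rewrite exchange_big; apply: eq_bigr => c _.
  under eq_bigr => a _ do rewrite -sumRMl.
  rewrite -sumRMr Rmult_comm /K; congr (_ * _).
  rewrite /Rm /rightMat (castB_sum (addn0 (e + k)%N)).
  apply: eq_bigr => b _; apply: rng_ext => j s a' b' h1 h2.
  by rewrite /Fp ifN //; apply/eqP; rewrite /k in h1; lia.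
under eq_bigr => x _ do under eq_bigr => y _ do rewrite step1.
apply: (@Rle_trans _ (\rsum_(x : rowRngt 0 k) specnorm Rm ^ 2 *
   (\rsum_(c0 : CBt k) (K x (castB (esym (addn0 k)) c0)) ^ 2))).
  apply: sumR_le => x _; exact: spec_bound.
rewrite -sumRMl.
under eq_bigr => x _ do rewrite (castB_sum (esym (addn0 k)) (fun c => K x c ^ 2)).
pose D0 := D (p + 0)%N.
have hK : forall x1 s c, K (x1, s) c =
   \rsum_(c' : CBt (p + 0)) L x1 c' * D0 s c' c.
  move=> x1 s c; rewrite /K /L /leftMat /=.
  rewrite exchange_big /=; apply: eq_bigr => c' _; rewrite sumRMr; apply: eq_bigr => a _.
  rewrite /Fp /D0 ifT; last by apply/eqP; rewrite addn0.
  congr (_ * _); apply: rng_ext => j s' a' b' h1 h2.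
  by rewrite ifN //; apply/eqP; lia.
have -> : (\rsum_(x : rowRngt 0 k) \rsum_(c : CBt (k + 0)) K x c ^ 2) =
  \rsum_(s : CPt (p + 0)) \rsum_(c : CBt (k + 0))
     \rsum_(x1 : rowRngt 0 p) (\rsum_(c' : CBt (p + 0)) L x1 c' * D0 s c' c) ^ 2.
  have -> : (\rsum_(x : rowRngt 0 k) \rsum_(c : CBt (k + 0)) K x c ^ 2) =
     \rsum_(x : (rowRngt 0 p * CPt (p + 0))%type) \rsum_(c : CBt (k + 0)) K (x.1, x.2) c ^ 2.
    by apply: eq_bigr => -[].
  rewrite -(@sum_pair _ _ (fun x1 s => \rsum_(c : CBt (k + 0)) K (x1, s) c ^ 2)) exchange_big.
  apply: eq_bigr => s _; rewrite exchange_big; apply: eq_bigr => c _.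
  by apply: eq_bigr => x1 _; rewrite hK.
apply: (@Rle_trans _ (specnorm Rm ^ 2 * (\rsum_(s : CPt (p + 0)) \rsum_(c : CBt (k + 0))
     specnorm L ^ 2 * (\rsum_(c' : CBt (p + 0)) (D0 s c' c) ^ 2)))).
  apply: Rmult_le_compat_l; first by apply: pow2_ge_0.
  apply: sumR_le => s _; apply: sumR_le => c _.
  exact: (spec_bound L (fun c' => D0 s c' c)).
have -> : (\rsum_(s : CPt (p + 0)) \rsum_(c : CBt (k + 0))
     specnorm L ^ 2 * (\rsum_(c' : CBt (p + 0)) (D0 s c' c) ^ 2)) =
     specnorm L ^ 2 * fnorm3 D0 ^ 2.
  rewrite /fnorm3 pow2_sqrt; last first.
    by do 2 (apply: sumR_ge0 => ? _); apply: sumsq_ge0.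
  rewrite sumRMl; apply: eq_bigr => s _; rewrite sumRMl.
  under eq_bigr => c _ do rewrite sumRMl.
  under [RHS]eq_bigr => c _ do rewrite sumRMl.
  by rewrite exchange_big.
have -> : fnorm3 D0 = fnorm3 (D p) by rewrite /D0 addn0.
right; ring.
Qed.
End Lin.

Set Implicit Arguments. Unset Strict Implicit.

Section Bnd.
Variables (Sit : Type) (valid : Sit -> Prop) (eps : Sit -> R).
Hypothesis heps : forall s, valid s -> 0 <= eps s <= 2.

Definition bnd3 (k : nat) (X Y Z : finType) (F : Sit -> X -> Y -> Z -> R) :=
  exists K, 0 <= K /\ forall s, valid s -> forall x y z, Rabs (F s x y z) <= K * eps s ^ k.

Lemma bnd_eq k (X Y Z : finType) (F G : Sit -> X -> Y -> Z -> R) :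
  (forall s, valid s -> forall x y z, G s x y z = F s x y z) -> bnd3 k F -> bnd3 k G.
Proof. move=> h [K [hK hF]]; exists K; split => // s hs x y z; rewrite h //; exact: hF. Qed.

Lemma bnd_const (X Y Z : finType) (F : X -> Y -> Z -> R) : bnd3 0 (fun _ => F).
Proof.
exists (fnorm3 F); split; first exact: sqrt_pos.
move=> s _ x y z; rewrite /= Rmult_1_r; exact: entry_fnorm3.
Qed.

Lemma bnd_weaken k (X Y Z : finType) (F : Sit -> X -> Y -> Z -> R) :
  bnd3 k.+1 F -> bnd3 k F.
Proof.
move=> [K [hK hF]]; exists (2 * K); split; first lra.
move=> s hs x y z; apply: Rle_trans (hF s hs x y z) _.
have [h0 h2] := heps hs; have hp := pow_le _ k h0; rewrite /=.
have := Rmult_le_pos _ _ hK hp; nra.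
Qed.

Lemma bnd_add k (X Y Z : finType) (F G : Sit -> X -> Y -> Z -> R) :
  bnd3 k F -> bnd3 k G -> bnd3 k (fun s x y z => F s x y z + G s x y z).
Proof.
move=> [K1 [h1 hF]] [K2 [h2 hG]]; exists (K1 + K2); split; first lra.
move=> s hs x y z; apply: Rle_trans (Rabs_triang _ _) _.
have := hF s hs x y z; have := hG s hs x y z; lra.
Qed.

Lemma bnd_sub k (X Y Z : finType) (F G : Sit -> X -> Y -> Z -> R) :
  bnd3 k F -> bnd3 k G -> bnd3 k (fun s x y z => F s x y z - G s x y z).
Proof.
move=> [K1 [h1 hF]] [K2 [h2 hG]]; exists (K1 + K2); split; first lra.
move=> s hs x y z; apply: Rle_trans (Rabs_triang _ _) _; rewrite Rabs_Ropp.
have := hF s hs x y z; have := hG s hs x y z; lra.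
Qed.

Lemma bnd_star a b (X1 X2 Y Bt Z : finType) (F : Sit -> X1 -> Y -> Bt -> R)
  (G : Sit -> X2 -> Bt -> Z -> R) :
  bnd3 a F -> bnd3 b G ->
  bnd3 (a + b) (fun s (x : (X1 * X2)%type) y z => \rsum_(c : Bt) F s x.1 y c * G s x.2 c z).
Proof.
move=> [K1 [h1 hF]] [K2 [h2 hG]]; exists (INR #|Bt| * (K1 * K2)); split.
  by apply: Rmult_le_pos; [apply: pos_INR | apply: Rmult_le_pos].
move=> s hs x y z; rewrite Rmult_assoc; apply: sumR_abs_le => c.
rewrite Rabs_mult pow_add.
have := Rabs_pos (F s x.1 y c); have := Rabs_pos (G s x.2 c z).
have := hF s hs x.1 y c; have := hG s hs x.2 c z.
move=> u1 u2 u3 u4.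
have -> : K1 * K2 * (eps s ^ a * eps s ^ b) = (K1 * eps s ^ a) * (K2 * eps s ^ b) by ring.
apply: Rmult_le_compat => //.
Qed.
End Bnd.
Arguments bnd_const {Sit valid eps X Y Z} F.

Unset Implicit Arguments. Set Strict Implicit.

Section Chain.
Variables (m n : nat) (T : peps m n).
Local Notation CBt := (CB m n T).
Local Notation CPt := (CP m n T).
Local Notation colTt := (colT m n T).
Local Notation rowRngt := (rowRng m n T).
Local Notation rngt := (rng m n T).

Variables (A : forall j, colTt j) (Bc : forall j, colTt j).
Definition Dl : forall j, colTt j := fun j x y z => Bc j x y z - A j x y z.

Definition Lin d : rowRngt 0 d -> CBt 0 -> CBt (d + 0) -> R :=
  fun r a b => \rsum_(p : 'I_d) rngt (Fp m n T A Dl p) 0 d r a b.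

Definition Qd d : rowRngt 0 d -> CBt 0 -> CBt (d + 0) -> R :=
  fun r a b => rngt Bc 0 d r a b - rngt A 0 d r a b - Lin d r a b.

Lemma Lin_rec d r a b :
  Lin d.+1 r a b =
  \rsum_(c : CBt (d + 0)) Lin d r.1 a c * A (d + 0)%N r.2 c b +
  \rsum_(c : CBt (d + 0)) rngt A 0 d r.1 a c * Dl (d + 0)%N r.2 c b.
Proof.
rewrite /Lin big_ord_recr /=; congr (_ + _).
  under [RHS]eq_bigr => c _ do rewrite sumRMr.
  rewrite [RHS]exchange_big /=; apply: eq_bigr => p _; apply: eq_bigr => c _.
  rewrite {2}/Fp ifN //; apply/eqP; have := ltn_ord p; lia.
apply: eq_bigr => c _; rewrite {2}/Fp ifT; last by apply/eqP; rewrite addn0.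
congr (_ * _); apply: rng_ext => j s a' b' h1 h2.
by rewrite /Fp ifN //; apply/eqP; lia.
Qed.

Lemma Q_rec d r a b :
  Qd d.+1 r a b =
  \rsum_(c : CBt (d + 0)) Qd d r.1 a c * A (d + 0)%N r.2 c b +
  \rsum_(c : CBt (d + 0)) (rngt Bc 0 d r.1 a c - rngt A 0 d r.1 a c) * Dl (d + 0)%N r.2 c b.
Proof.
rewrite /Qd Lin_rec /= -sumRD !sumRB -sumRB sumRB -sumRD.
apply: eq_bigr => c _; rewrite /Dl; ring.
Qed.

End Chain.

Unset Implicit Arguments. Set Strict Implicit.

Section Bounds.
Variables (m n : nat) (T : peps m n).
Local Notation CBt := (CB m n T).
Local Notation CPt := (CP m n T).
Local Notation colTt := (colT m n T).
Local Notation rowRngt := (rowRng m n T).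
Local Notation rngt := (rng m n T).

Variables (Sit : Type) (valid : Sit -> Prop) (eps : Sit -> R).
Hypothesis heps : forall s, valid s -> 0 <= eps s <= 2.
Variables (A : forall j, colTt j) (Bs : Sit -> forall j, colTt j).
Hypothesis hDl : forall j, bnd3 valid eps 1 (fun s => Dl m n T A (Bs s) j).

Lemma bnd_B j : bnd3 valid eps 0 (fun s => Bs s j).
Proof.
apply: (bnd_eq (F := fun s x y z => A j x y z + Dl m n T A (Bs s) j x y z)).
  by move=> s _ x y z; rewrite /Dl; ring.
apply: bnd_add; first exact: bnd_const.
by apply: (bnd_eq _ (bnd_weaken heps (hDl j))) => s _ x y z.
Qed.

Lemma bnd_X d : bnd3 valid eps 0 (fun s => rngt (Bs s) 0 d).
Proof.
elim: d => [|d IH].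
  by apply: (bnd_eq (F := fun _ => rngt A 0 0)) => //; exact: bnd_const.
exact: (bnd_eq _ (bnd_star IH (bnd_B (d + 0)%N))).
Qed.

Lemma bnd_e d : bnd3 valid eps 1 (fun s r a b => rngt (Bs s) 0 d r a b - rngt A 0 d r a b).
Proof.
elim: d => [|d IH].
  exists 0; split; first lra.
  move=> s _ x y z; rewrite /= Rminus_diag Rabs_R0; lra.
apply: (bnd_eq (F := fun s r a b =>
   \rsum_(c : CBt (d + 0)) (rngt (Bs s) 0 d r.1 a c - rngt A 0 d r.1 a c) * A (d + 0)%N r.2 c b +
   \rsum_(c : CBt (d + 0)) rngt (Bs s) 0 d r.1 a c * Dl m n T A (Bs s) (d + 0)%N r.2 c b)).
  move=> s _ r a b /=; rewrite sumRB -sumRD; apply: eq_bigr => c _; rewrite /Dl.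
  move: (rngt (Bs s) 0 d r.1 a c) (rngt A 0 d r.1 a c) (Bs s _ r.2 c b) (A _ r.2 c b) => u1 u2 u3 u4; ring.
have h1 := bnd_star (b := 0) IH (bnd_const (A (d + 0)%N)).
have h2 := bnd_star (a := 0) (bnd_X d) (hDl (d + 0)%N).
exact: (bnd_add h1 h2).
Qed.

Lemma bnd_Q d : bnd3 valid eps 2 (fun s => Qd m n T A (Bs s) d).
Proof.
elim: d => [|d IH].
  exists 0; split; first lra.
  move=> s _ x y z; rewrite /Qd /Lin big_ord0 /= Rminus_diag; have -> : 0 - 0 = 0 by ring. rewrite Rabs_R0; lra.
apply: (bnd_eq _ (bnd_add (bnd_star (b := 0) IH (bnd_const (A (d + 0)%N)))
                          (bnd_star (a := 1) (bnd_e d) (hDl (d + 0)%N)))).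
move=> s _ r a b; exact: Q_rec.
Qed.
End Bounds.

Set Implicit Arguments. Unset Strict Implicit.

Lemma prodR_abs (I : Type) (r : seq I) (x X : I -> R) :
  (forall i, Rabs (x i) <= X i) ->
  Rabs (\big[Rmult/1]_(i <- r) x i) <= \big[Rmult/1]_(i <- r) X i.
Proof.
move=> h; elim: r => [|a r IH]; rewrite ?big_nil ?big_cons; first by rewrite Rabs_R1; lra.
rewrite Rabs_mult; apply: Rmult_le_compat => //; exact: Rabs_pos.
Qed.

Lemma prodR_ge0 (I : Type) (r : seq I) (X : I -> R) :
  (forall i, 0 <= X i) -> 0 <= \big[Rmult/1]_(i <- r) X i.
Proof.
move=> h; elim: r => [|a r IH]; rewrite ?big_nil ?big_cons; first lra.
exact: Rmult_le_pos.
Qed.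

Lemma prod_pert (I : Type) (r : seq I) (x y X : I -> R) (e : R) :
  0 <= e <= 1 -> (forall i, Rabs (x i) <= X i) -> (forall i, Rabs (y i) <= e * X i) ->
  Rabs (\big[Rmult/1]_(i <- r) (x i + y i) - \big[Rmult/1]_(i <- r) x i) <=
  e * INR (size r) * \big[Rmult/1]_(i <- r) (2 * X i).
Proof.
move=> he hx hy.
have hX : forall i, 0 <= X i by move=> i; apply: Rle_trans (hx i); exact: Rabs_pos.
have hxy : forall i, Rabs (x i + y i) <= 2 * X i.
  move=> i; apply: Rle_trans (Rabs_triang _ _) _; have := hx i; have := hy i;
  have := hX i; nra.
elim: r => [|a r IH]; rewrite ?big_nil ?big_cons.
  by rewrite Rminus_diag Rabs_R0 /=; lra.
set P' := \big[Rmult/1]_(i <- r) (x i + y i); set P := \big[Rmult/1]_(i <- r) x i.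
set Q := \big[Rmult/1]_(i <- r) (2 * X i).
have hP' : Rabs P' <= Q by apply: prodR_abs.
have hQ : 0 <= Q by apply: prodR_ge0 => i; have := hX i; lra.
have -> : (x a + y a) * P' - x a * P = x a * (P' - P) + y a * P' by ring.
apply: Rle_trans (Rabs_triang _ _) _; rewrite !Rabs_mult.
have h1 := Rmult_le_compat _ _ _ _ (Rabs_pos _) (Rabs_pos _) (hx a) IH.
have h2 := Rmult_le_compat _ _ _ _ (Rabs_pos _) (Rabs_pos _) (hy a) hP'.
have -> : INR (size (a :: r)) = INR (size r) + 1 by rewrite -S_INR.
have := hX a; have := pos_INR (size r); move=> h3 h4.
have h5 : 0 <= e * INR (size r) * Q by apply: Rmult_le_pos => //; apply: Rmult_le_pos; lra.
have h6 : 0 <= e * X a * Q by apply: Rmult_le_pos => //; apply: Rmult_le_pos; lra.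
have h7 : 0 <= X a * (e * INR (size r) * Q) by apply: Rmult_le_pos.
apply: Rle_trans (Rplus_le_compat _ _ _ _ h1 h2) _.
have -> : e * (INR (size r) + 1) * (2 * X a * Q) =
  2 * (X a * (e * INR (size r) * Q)) + 2 * (e * X a * Q) by ring.
rewrite -/Q; lra.
Qed.

Lemma mink_sum (X : finType) (J : Type) (r : seq J) (f : J -> X -> R) :
  sqrt (\rsum_(x : X) (\big[Rplus/0]_(p <- r) f p x) ^ 2) <=
  \big[Rplus/0]_(p <- r) sqrt (\rsum_(x : X) (f p x) ^ 2).
Proof.
elim: r => [|a r IH].
  rewrite big_nil; under eq_bigr => x _ do rewrite big_nil.
  rewrite big1 ?sqrt_0 => [|x _]; [lra | simpl; ring].
rewrite big_cons; under eq_bigr => x _ do rewrite big_cons.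
apply: Rle_trans (mink _ _) _; lra.
Qed.

Lemma fnorm_bound (X : finType) (f : X -> R) (c : R) :
  0 <= c -> (forall x, Rabs (f x) <= c) -> sqrt (\rsum_(x : X) (f x) ^ 2) <= sqrt (INR #|X|) * c.
Proof.
move=> hc h.
rewrite -(sqrt_pow2 c hc) -sqrt_mult; [|exact: pos_INR|exact: pow2_ge_0].
apply: sqrt_le_1_alt; rewrite -sumR_const; apply: sumR_le => x _.
have := h x; have := Rabs_pos (f x); rewrite -(pow2_abs (f x)); nra.
Qed.

Unset Implicit Arguments. Set Strict Implicit.

Section Final.
Variables (m n : nat) (T : peps m n).
Local Notation CBt := (CB m n T).
Local Notation CPt := (CP m n T).
Local Notation colTt := (colT m n T).
Local Notation nodeTt := (nodeT m n T).
Local Notation rowRngt := (rowRng m n T).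
Local Notation rngt := (rng m n T).

Lemma pertNode_last (delta : forall i, nodeTt i n.-1) i x1 x2 x3 x4 x5 :
  pertNode m n T delta i n.-1 x1 x2 x3 x4 x5 = node T i n.-1 x1 x2 x3 x4 x5 + delta i x1 x2 x3 x4 x5.
Proof.
rewrite /pertNode; case: (Nat.eq_dec n.-1 n.-1) => [e|//].
by rewrite (eq_irrelevance e erefl).
Qed.

Lemma pertNode_other (delta : forall i, nodeTt i n.-1) i j x1 x2 x3 x4 x5 :
  j <> n.-1 -> pertNode m n T delta i j x1 x2 x3 x4 x5 = node T i j x1 x2 x3 x4 x5.
Proof.
move=> hj; rewrite /pertNode; case: (Nat.eq_dec n.-1 j) => [e|//].
by case: hj.
Qed.

Record sit := Sit { e1 : R; e2 : R; dl : forall j, colTt j; dd : forall i, nodeTt i n.-1 }.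
Definition valid (s : sit) := 0 <= e1 s <= 1 /\ 0 <= e2 s <= 1 /\
   isPert m n T (e1 s) (e2 s) (dl s) (dd s).
Definition eps (s : sit) := e1 s + e2 s.
Definition Bs (s : sit) := pertChain m n T (dl s) (dd s).
Local Notation Acol := (column m n T).

Lemma heps s : valid s -> 0 <= eps s <= 2.
Proof. rewrite /valid /eps; lra. Qed.

Lemma Dl_first s j x y z : (j < n.-1)%N -> Dl m n T Acol (Bs s) j x y z = dl s j x y z.
Proof. by move=> hj; rewrite /Dl /Bs /pertChain hj /addCol; ring. Qed.

Lemma Dl_last s x y z :
  Dl m n T Acol (Bs s) n.-1 x y z =
  colOf m n T n.-1 (fun i => addNode m n T i n.-1 (node T i n.-1) (dd s i)) x y z
  - column m n T n.-1 x y z.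
Proof.
rewrite /Dl /Bs /pertChain ltnn /colOf; congr (_ - _).
apply: eq_bigr => c _; apply: eq_bigr => i _.
by rewrite pertNode_last.
Qed.

Lemma Dl_other s j x y z : (n.-1 < j)%N -> Dl m n T Acol (Bs s) j x y z = 0.
Proof.
move=> hj; rewrite /Dl /Bs /pertChain ifN; last by rewrite -leqNgt ltnW.
rewrite /column /colOf sumRB big1 // => c _.
rewrite Rminus_diag_eq //; apply: eq_bigr => i _.
by rewrite pertNode_other //; lia.
Qed.


Lemma hDl j : bnd3 valid eps 1 (fun s => Dl m n T Acol (Bs s) j).
Proof.
case: (ltnP j n.-1) => hj.
  exists (fnorm3 (column m n T j)); split; first exact: sqrt_pos.
  move=> s [h1 [h2 [hP1 hP2]]] x y z; rewrite Dl_first //.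
  apply: Rle_trans (entry_fnorm3 _ _ _ _) _.
  apply: Rle_trans (hP1 j hj) _.
  have := sqrt_pos (\rsum_(x : CPt j) \rsum_(y : CBt j) \rsum_(z : CBt j.+1) (column m n T j x y z) ^ 2).
  rewrite /fnorm3 /eps /=; nra.
case: (eqVneq j n.-1) => [->|hne]; last first.
  exists 0; split; first lra.
  move=> s _ x y z; rewrite Dl_other; last by lia.
  rewrite Rabs_R0 /=; lra.
pose X (i : 'I_m) := fnorm5 (node T i n.-1).
exists (INR #|VB m n T n.-1| * (INR (size (index_enum 'I_m)) * \big[Rmult/1]_(i <- index_enum 'I_m) (2 * X i))).
split.
  apply: Rmult_le_pos; first exact: pos_INR.
  apply: Rmult_le_pos; first exact: pos_INR.
  apply: prodR_ge0 => i; apply: Rmult_le_pos; [lra | exact: sqrt_pos].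
move=> s [h1 [h2 [hP1 hP2]]] xx yy zz; rewrite Dl_last /colOf /column /colOf sumRB.
rewrite Rmult_assoc; apply: sumR_abs_le => c.
have hp := @prod_pert _ (index_enum 'I_m)
  (fun i => node T i n.-1 (xx i) (yy i) (zz i) (c (widen_ord (leqnSn m) i)) (c (lift ord0 i)))
  (fun i => dd s i (xx i) (yy i) (zz i) (c (widen_ord (leqnSn m) i)) (c (lift ord0 i)))
  X (e2 s) h2 (fun i => entry_fnorm5 _ _ _ _ _ _)
  (fun i => Rle_trans _ _ _ (entry_fnorm5 _ _ _ _ _ _) (hP2 i (ltn_ord i))).
apply: Rle_trans hp _.
rewrite /eps /=.
have hq : 0 <= INR (size (index_enum 'I_m)) * \big[Rmult/1]_(i <- index_enum 'I_m) (2 * X i).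
  apply: Rmult_le_pos; first exact: pos_INR.
  apply: prodR_ge0 => i; apply: Rmult_le_pos; [lra | exact: sqrt_pos].
rewrite [X in X <= _]Rmult_assoc [X in X <= _]Rmult_comm; apply: Rmult_le_compat_l => //; lra.
Qed.

End Final.

Unset Implicit Arguments. Set Strict Implicit.

Section Final2.
Variables (m n : nat) (T : peps m n).
Local Notation CBt := (CB m n T).
Local Notation rowRngt := (rowRng m n T).
Local Notation rngt := (rng m n T).
Local Notation colTt := (colT m n T).

Lemma CB_triv k : (n <= k)%N -> forall c c' : CBt k, c = c'.
Proof.
move=> hk c c'; apply/ffunP => i.
have e : forall N (x y : 'I_N), N = 1%N -> x = y.
  by move=> N x y hN; subst N; rewrite (ord1 x) (ord1 y).
by apply: e; rewrite /bdim hk orbT.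
Qed.

Lemma specR_last (A : forall j, colTt j) : (0 < n)%N ->
  specnorm (rightMat m n T A n.-1) <= 1.
Proof.
move=> hn.
have gen : forall k e, e = 0%N -> (n <= k)%N ->
   specnorm (fun (r : rowRngt k e) (a : CBt k) =>
      \rsum_(b : CBt (e + k)) rngt A k e r a b) <= 1.
  move=> k e he hk; subst e.
  apply: spec_le => r [v [hv ->]].
  rewrite -sqrt_1; apply: sqrt_le_1_alt.
  have hc : INR #|CBt k| <= 1.
    have : (#|CBt k| <= 1)%N by apply/fintype_le1P => x y; exact: CB_triv.
    by move/leP/le_INR.
  apply: Rle_trans (@sumR_le _ _ _ _ (fun _ => 1) _) _.
    move=> x _.
    have -> : (\rsum_(a : CBt k) (\rsum_(b : CBt (0 + k)) rngt A k 0 x a b) * v a) =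
              \rsum_(a : CBt k) 1 * v a.
      apply: eq_bigr => a _; congr (_ * _).
      rewrite (bigD1 a) //= eqxx big1 ?Rplus_0_r // => b hb.
      by rewrite eq_sym (negbTE hb).
    apply: Rle_trans (CS _ _) _.
    have -> : (\rsum_(a : CBt k) 1 ^ 2) = INR #|CBt k| by rewrite sumR_const /=; ring.
    have := sumsq_ge0 v; have := pos_INR #|CBt k|; nra.
  rewrite sumR_const; have : (#|rowRngt k 0| = 1)%N by rewrite card_unit.
  by move=> ->; rewrite /=; lra.
apply: gen; lia.
Qed.

Lemma decomp (A Bc : forall j, colTt j) S :
  contract m n T Bc S - contract m n T A S =
  \rsum_(p : 'I_n) contract m n T (Fp m n T A (Dl m n T A Bc) p) S +
  \rsum_(a : CBt 0) \rsum_(b : CBt (n + 0)) Qd m n T A Bc n S a b.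
Proof.
rewrite /contract sumRB.
have -> : (\rsum_(p : 'I_n) \rsum_(a : CBt 0) \rsum_(b : CBt (n + 0))
              rngt (Fp m n T A (Dl m n T A Bc) p) 0 n S a b) =
          \rsum_(a : CBt 0) \rsum_(b : CBt (n + 0)) Lin m n T A Bc n S a b.
  rewrite exchange_big; apply: eq_bigr => a _; rewrite exchange_big.
  by apply: eq_bigr => b _.
rewrite -sumRD; apply: eq_bigr => a _; rewrite sumRB -sumRD; apply: eq_bigr => b _.
rewrite /Qd; lra.
Qed.

End Final2.

Unset Implicit Arguments. Set Strict Implicit.

Lemma fnorm3_ext (X Y Z : finType) (f g : X -> Y -> Z -> R) :
  (forall x y z, f x y z = g x y z) -> fnorm3 f = fnorm3 g.
Proof.
move=> h; rewrite /fnorm3; congr sqrt; apply: eq_bigr => x _; apply: eq_bigr => y _.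
by apply: eq_bigr => z _; rewrite h.
Qed.

Lemma fnorm3_zero (X Y Z : finType) (f : X -> Y -> Z -> R) :
  fnorm3 f <= 0 -> forall x y z, f x y z = 0.
Proof.
move=> h x y z; have := entry_fnorm3 f x y z; have := Rabs_pos (f x y z) => h1 h2.
have : Rabs (f x y z) = 0 by lra.
move=> h3; case: (Req_dec (f x y z) 0) => // hne; have := Rabs_no_R0 _ hne; lra.
Qed.

Lemma sum_ord_last (N : nat) (g : nat -> R) : (0 < N)%N ->
  (\rsum_(p : 'I_N) g p) = (\rsum_(p : 'I_N.-1) g p) + g N.-1.
Proof. by case: N => // N _; rewrite big_ord_recr. Qed.

Lemma contract_zero_last (m n : nat) (T : peps m n) (C : forall j, colT m n T j) N
  (S : rowRng m n T 0 N) : (0 < N)%N -> (forall x y z, C N.-1 x y z = 0) ->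
  (\rsum_(a : CB m n T 0) \rsum_(b : CB m n T (N + 0)) rng m n T C 0 N S a b) = 0.
Proof.
case: N S => // N S _ hz.
have hz' : forall x y z, C (N + 0)%N x y z = 0 by rewrite addn0.
rewrite big1 // => a _; rewrite big1 // => b _.
rewrite /= big1 // => c _; rewrite hz'; ring.
Qed.

Theorem mainTheorem14 (m n : nat) (T : peps m n) :
  (0 < m)%N -> (0 < n)%N ->
  (exists S, contract m n T (column m n T) S <> 0) ->
  exists C eps0 : R, 0 < eps0 /\
    forall (eps1 eps2 : R) (Delta : forall j : nat, colT m n T j)
           (delta : forall i : nat, nodeT m n T i n.-1),
      0 <= eps1 <= eps0 -> 0 <= eps2 <= eps0 ->
      isPert m n T eps1 eps2 Delta delta ->
      relErr m n T Delta delta <=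
        eps1 * (\rsum_(i : 'I_n.-1)
                 (specnorm (leftMat m n T (column m n T) i)
                  * fnorm3 (column m n T i)
                  * specnorm (rightMat m n T (column m n T) i) / normT m n T))
        + relErrCol m n T delta
            * specnorm (leftMat m n T (column m n T) n.-1)
            * fnorm3 (column m n T n.-1) / normT m n T
        + C * (eps1 ^ 2 + eps2 ^ 2).
Proof.
move=> hm hn [S0 hS0].
set Acol := column m n T.
have hN : 0 < normT m n T.
  rewrite /normT /fnorm1; apply: sqrt_lt_R0.
  apply: Rlt_le_trans (sumsq_term _ S0).
  have := Rsqr_pos_lt _ hS0; rewrite Rsqr_pow2; lra.
have hcol : 0 < fnorm3 (Acol n.-1).
  case: (Rlt_or_le 0 (fnorm3 (Acol n.-1))) => // hle.
  have hz := fnorm3_zero _ _ _ _ hle.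
  by case: hS0; rewrite /contract contract_zero_last.
have [KQ [hKQ hQ]] := bnd_Q m n T (sit m n T) (valid m n T) (eps m n T) (heps m n T) Acol (Bs m n T) (hDl m n T) n.
set cardQ := INR #|CB m n T 0| * INR #|CB m n T (n + 0)|.
have hcQ : 0 <= cardQ by apply: Rmult_le_pos; apply: pos_INR.
set Cq := sqrt (INR #|rowRng m n T 0 n|) * (cardQ * KQ).
have hCq : 0 <= Cq by apply: Rmult_le_pos; [apply: sqrt_pos | apply: Rmult_le_pos].
exists (2 * Cq / normT m n T), 1; split; first lra.
move=> eps1 eps2 Delta delta he1 he2 hP.
pose s := Sit m n T eps1 eps2 Delta delta.
have hv : valid m n T s by rewrite /valid /=; split; [lra | split; [lra | exact: hP]].
set g := fun p : nat => fnorm1 (contract m n T (Fp m n T Acol (Dl m n T Acol (Bs m n T s)) p)).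
have hE : fnorm1 (fun S => contract m n T (pertChain m n T Delta delta) S - contract m n T Acol S)
          <= (\rsum_(p : 'I_n) g p) + Cq * eps m n T s ^ 2.
  rewrite /fnorm1.
  under eq_bigr => S _ do rewrite (decomp m n T Acol (Bs m n T s)).
  apply: Rle_trans (mink _ _) _; apply: Rplus_le_compat.
    exact: mink_sum.
  rewrite /Cq Rmult_assoc; apply: fnorm_bound.
    by apply: Rmult_le_pos => //; apply: Rmult_le_pos => //; rewrite /eps /=; case: hv => ? [? ?]; nra.
  move=> S; rewrite /cardQ !Rmult_assoc; apply: sumR_abs_le => a.
  apply: sumR_abs_le => b; exact: hQ.
rewrite (sum_ord_last _ g hn) in hE.
have hg1 : forall p : 'I_n.-1, g p <=
    eps1 * (specnorm (leftMat m n T Acol p) * fnorm3 (Acol p) * specnorm (rightMat m n T Acol p)).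
  move=> p; have hp : (p < n.-1)%N := ltn_ord p.
  apply: Rle_trans (lin_bound _ _ _ _ _ _ _) _; first lia.
  have -> : fnorm3 (Dl m n T Acol (Bs m n T s) p) = fnorm3 (Delta p).
    by apply: fnorm3_ext => x y z; rewrite Dl_first.
  have := proj1 hP p hp.
  have := spec_ge0 (leftMat m n T Acol p); have := spec_ge0 (rightMat m n T Acol p).
  set a := specnorm _; set b := specnorm _ => ha hb h.
  have := Rmult_le_compat_r _ _ _ hb (Rmult_le_compat_l _ _ _ ha h).
  move=> h2; rewrite /Acol in h2 *; lra.
have hg2 : g n.-1 <= relErrCol m n T delta * specnorm (leftMat m n T Acol n.-1)
                    * fnorm3 (Acol n.-1).
  apply: Rle_trans (lin_bound _ _ _ _ _ _ _) _; first lia.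
  have -> : fnorm3 (Dl m n T Acol (Bs m n T s) n.-1) = relErrCol m n T delta * fnorm3 (Acol n.-1).
    rewrite /relErrCol; have -> : forall u v : R, 0 < v -> u / v * v = u by move=> u v hv'; field; lra.
    - by apply: fnorm3_ext => x y z; rewrite Dl_last.
    - exact: hcol.
  have := spec_ge0 (leftMat m n T Acol n.-1); have := specR_last m n T Acol hn.
  have := spec_ge0 (rightMat m n T Acol n.-1).
  have hre : 0 <= relErrCol m n T delta.
    rewrite /relErrCol; apply: Rmult_le_pos; first exact: sqrt_pos.
    by apply: Rlt_le; apply: Rinv_0_lt_compat.
  set a := specnorm (leftMat _ _ _ _ _); set b := specnorm _ => hb hb1 ha.
  have hx : 0 <= a * (relErrCol m n T delta * fnorm3 (Acol n.-1)).
    by apply: Rmult_le_pos => //; apply: Rmult_le_pos => //; lra.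
  have := Rmult_le_compat_l _ _ _ hx hb1; rewrite Rmult_1_r => h; apply: Rle_trans h _.
  right; ring.
have hsum : (\rsum_(p : 'I_n.-1) g p) <= eps1 * (\rsum_(i : 'I_n.-1)
   (specnorm (leftMat m n T Acol i) * fnorm3 (Acol i) * specnorm (rightMat m n T Acol i))).
  by rewrite sumRMl; apply: sumR_le => p _; exact: hg1.
have heps2 : eps m n T s ^ 2 <= 2 * (eps1 ^ 2 + eps2 ^ 2).
  rewrite /eps /=; have := pow2_ge_0 (eps1 - eps2); nra.
rewrite /relErr.
apply: (Rmult_le_reg_r (normT m n T)) => //.
have -> : fnorm1 (fun S => contract m n T (pertChain m n T Delta delta) S - contract m n T Acol S)
    / normT m n T * normT m n T =
    fnorm1 (fun S => contract m n T (pertChain m n T Delta delta) S - contract m n T Acol S).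
  by field; lra.
have -> : (\rsum_(i : 'I_n.-1) specnorm (leftMat m n T Acol i) * fnorm3 (Acol i) *
      specnorm (rightMat m n T Acol i) / normT m n T) =
    (\rsum_(i : 'I_n.-1) specnorm (leftMat m n T Acol i) * fnorm3 (Acol i) *
      specnorm (rightMat m n T Acol i)) / normT m n T.
  by rewrite /Rdiv sumRMr.
set SS := \rsum_(i : 'I_n.-1) _.
have -> : (eps1 * (SS / normT m n T) +
   relErrCol m n T delta * specnorm (leftMat m n T Acol n.-1) * fnorm3 (Acol n.-1) / normT m n T +
   2 * Cq / normT m n T * (eps1 ^ 2 + eps2 ^ 2)) * normT m n T =
   eps1 * SS + relErrCol m n T delta * specnorm (leftMat m n T Acol n.-1) * fnorm3 (Acol n.-1) +
   2 * Cq * (eps1 ^ 2 + eps2 ^ 2).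
  by field; lra.
have := Rmult_le_compat_l _ _ _ hCq heps2.
move=> h; rewrite -/SS in hsum; lra.
Qed.
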